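(* Let $\mathsf{NL}+\{\mathrm{D}\}$ be $\mathsf{NL}$ extended by the axiom scheme (D) $\varphi\Rightarrow\varphi\oplus\psi$, where $\varphi\oplus\psi:=(\varphi^{*}\otimes\psi^{*})^{*}$. Then $\mathsf{NL}+\{\mathrm{D}\}$ is trivial, i.e. every formula is a theorem of it.
   Context: Formulas are built from a countably infinite set of variables using binary $\otimes,\circ$ and unary ${}^{*}$. Abbreviations: $\varphi\Rightarrow\psi:=(\varphi\circ\psi^{*})^{*}$; $\varphi\Leftrightarrow\psi:=(\varphi\Rightarrow\psi)\otimes(\psi\Rightarrow\varphi)$; $\varphi\not\Leftrightarrow\psi:=(\varphi\Leftrightarrow\psi)^{*}$; $\varphi\not\Leftrightarrow\psi\not\Leftrightarrow\chi:=((\varphi\not\Leftrightarrow\psi)\otimes(\varphi\not\Leftrightarrow\chi))\otimes(\psi\not\Leftrightarrow\chi)$. Axiom schemes: (A1) $\varphi\Rightarrow\varphi$; (A2) $(\varphi\circ\psi)\Rightarrow(\psi\circ\varphi)$; (A3) $\varphi\Rightarrow\varphi^{**}$; (A4) $(\varphi\Rightarrow\psi)\Rightarrow(\varphi\circ\psi)$; (A5) $(\varphi\otimes\psi)\Leftrightarrow(\psi\otimes\varphi)$; (A6) $((\varphi\otimes\psi)\Rightarrow\chi)\Rightarrow((\varphi\otimes\chi^{*})\Rightarrow\psi^{*})$; (A7) $(\varphi\not\Leftrightarrow\psi\not\Leftrightarrow\chi)\Rightarrow((\varphi\Rightarrow\psi)\Rightarrow((\psi\Rightarrow\chi)\Rightarrow(\varphi\Rightarrow\chi)))$.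 Theorems of $\mathsf{NL}$: least set containing all instances of (A1)–(A7) and closed under rules applying only to theorems: from theorems $\varphi\Rightarrow\psi$, $\varphi$ infer $\psi$; from theorems $\varphi,\psi$ infer $\varphi\otimes\psi$; from theorems $\varphi\Leftrightarrow\psi$ and $\chi$ infer $\chi'$ ($\chi'$ from $\chi$ replacing one or more occurrences of $\varphi$ by $\psi$); from a theorem $\varphi\otimes\psi$ infer $\varphi$. Extending by an axiom scheme adds its instances to the initial set. *)

(* Defs.v *)
(* Formulas over a countably infinite set of variables (indexed by nat),
   binary connectives (x) = Tens and o = Circ, unary * = Star. *)
Inductive form : Type :=
| Var : nat -> form
| Tens : form -> form -> form
| Circ : form -> form -> form
| Star : form -> form.

Definition Imp (a b : form) : form := Star (Circ a (Star b)).
Definition Iff (a b : form) : form := Tens (Imp a b) (Imp b a).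
Definition NIff (a b : form) : form := Star (Iff a b).
Definition NIff3 (a b c : form) : form :=
  Tens (Tens (NIff a b) (NIff a c)) (NIff b c).
Definition Oplus (a b : form) : form := Star (Tens (Star a) (Star b)).

Inductive repl0 (p q : form) : form -> form -> Prop :=
| r0_refl : forall c, repl0 p q c c
| r0_here : repl0 p q p q
| r0_tens : forall a a' b b', repl0 p q a a' -> repl0 p q b b' ->
    repl0 p q (Tens a b) (Tens a' b')
| r0_circ : forall a a' b b', repl0 p q a a' -> repl0 p q b b' ->
    repl0 p q (Circ a b) (Circ a' b')
| r0_star : forall a a', repl0 p q a a' -> repl0 p q (Star a) (Star a').

Inductive repl1 (p q : form) : form -> form -> Prop :=
| r1_here : repl1 p q p q
| r1_tensl : forall a a' b b', repl1 p q a a' -> repl0 p q b b' ->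
    repl1 p q (Tens a b) (Tens a' b')
| r1_tensr : forall a a' b b', repl0 p q a a' -> repl1 p q b b' ->
    repl1 p q (Tens a b) (Tens a' b')
| r1_circl : forall a a' b b', repl1 p q a a' -> repl0 p q b b' ->
    repl1 p q (Circ a b) (Circ a' b')
| r1_circr : forall a a' b b', repl0 p q a a' -> repl1 p q b b' ->
    repl1 p q (Circ a b) (Circ a' b')
| r1_star : forall a a', repl1 p q a a' -> repl1 p q (Star a) (Star a').

Inductive NL_axiom : form -> Prop :=
| A1 : forall a, NL_axiom (Imp a a)
| A2 : forall a b, NL_axiom (Imp (Circ a b) (Circ b a))
| A3 : forall a, NL_axiom (Imp a (Star (Star a)))
| A4 : forall a b, NL_axiom (Imp (Imp a b) (Circ a b))
| A5 : forall a b, NL_axiom (Iff (Tens a b) (Tens b a))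
| A6 : forall a b c,
    NL_axiom (Imp (Imp (Tens a b) c) (Imp (Tens a (Star c)) (Star b)))
| A7 : forall a b c,
    NL_axiom (Imp (NIff3 a b c)
                  (Imp (Imp a b) (Imp (Imp b c) (Imp a c)))).

Inductive D_axiom : form -> Prop :=
| D : forall a b, D_axiom (Imp a (Oplus a b)).

Inductive thm (Ax : form -> Prop) : form -> Prop :=
| thm_NL : forall f, NL_axiom f -> thm Ax f
| thm_ax : forall f, Ax f -> thm Ax f
| thm_mp : forall a b, thm Ax (Imp a b) -> thm Ax a -> thm Ax b
| thm_adj : forall a b, thm Ax a -> thm Ax b -> thm Ax (Tens a b)
| thm_repl : forall a b c c', thm Ax (Iff a b) -> thm Ax c ->
    repl1 a b c c' -> thm Ax c'
| thm_simp : forall a b, thm Ax (Tens a b) -> thm Ax a.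

Definition NLD_thm : form -> Prop := thm D_axiom.

(* Main.v *)
Require Import Defs.

Section Triv.
Local Notation TH := (thm D_axiom).

Lemma mp a b : TH (Imp a b) -> TH a -> TH b.
Proof. intros; eapply thm_mp; eauto. Qed.

Lemma ax f : NL_axiom f -> TH f.
Proof. intros; apply thm_NL; auto. Qed.

Lemma circ_iff x y : TH (Iff (Circ x y) (Circ y x)).
Proof. unfold Iff; apply thm_adj; apply ax; apply A2. Qed.

Lemma swap_star_circ x y : TH (Star (Circ x y)) -> TH (Star (Circ y x)).
Proof.
  intros H. eapply thm_repl; [apply (circ_iff x y) | exact H |].
  apply r1_star; apply r1_here.
Qed.

Definition W (p : form) := Star (Star (Tens (Star (Star p)) (Star p))).
Definition U (p : form) := Circ (W p) p.

Lemma U_thm p : TH (U p).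
Proof.
  assert (H : TH (Imp (Star p) (Oplus (Star p) p))) by (apply thm_ax; constructor).
  unfold Imp, Oplus in H.
  apply swap_star_circ in H.
  pose proof (ax _ (A4 (W p) p)) as H4.
  unfold U, W. eapply mp; [exact H4|]. exact H.
Qed.

Lemma Ustar_thm p : TH (Star (U p)).
Proof.
  assert (H : TH (Imp p (Oplus p (Star p)))) by (apply thm_ax; constructor).
  unfold Imp, Oplus in H.
  assert (H2 : TH (Star (Circ p (Star (Star (Tens (Star (Star p)) (Star p))))))).
  { eapply thm_repl; [apply ax; apply (A5 (Star p) (Star (Star p))) | exact H |].
    apply r1_star. apply r1_circr; [apply r0_refl|].
    apply r1_star, r1_star, r1_here. }
  apply swap_star_circ in H2. exact H2.
Qed.

Lemma dstar_all z : TH (Star (Star z)).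
Proof.
  set (u := U (Var 0)).
  assert (Hu : TH u) by apply U_thm.
  assert (Hus : TH (Star u)) by apply Ustar_thm.
  assert (HD : TH (Star (Tens (Star u) (Star z)))).
  { eapply mp; [apply thm_ax; apply (D u z) | exact Hu]. }
  pose proof (ax _ (A1 (Tens (Star u) (Star z)))) as H1.
  pose proof (ax _ (A6 (Star u) (Star z) (Tens (Star u) (Star z)))) as H6.
  pose proof (mp _ _ H6 H1) as H7.
  eapply mp; [exact H7|]. apply thm_adj; assumption.
Qed.

Lemma star_all b : TH (Star b).
Proof.
  set (t := U (Var 0)).
  assert (Ht : TH t) by apply U_thm.
  pose proof (ax _ (A3 (Tens t b))) as H3.
  pose proof (ax _ (A6 t b (Star (Star (Tens t b))))) as H6.
  pose proof (mp _ _ H6 H3) as H7.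
  eapply mp; [exact H7|]. apply thm_adj; [exact Ht | apply dstar_all].
Qed.

End Triv.

Theorem proposition5p10 : forall f : form, NLD_thm f.
Proof.
  intro f. unfold NLD_thm.
  assert (Ht : thm D_axiom (U (Var 0))) by apply U_thm.
  eapply thm_repl with (a := U (Var 0)) (b := f) (c := U (Var 0));
    [ | exact Ht | apply r1_here].
  unfold Iff, Imp. apply thm_adj; apply star_all.
Qed.
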